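(* Let $d$ be a positive integer and $S$ any finite set of points in $\mathbb{R}^d$ (not necessarily in general position). Then the Radon partition graph $G_T[S,2]$ is connected.
   Context: A Radon partition of a finite set $S\subset\mathbb{R}^d$ is a partition of $S$ into two nonempty disjoint parts $P_1,P_2$ (unordered) with $\operatorname{conv}(P_1)\cap\operatorname{conv}(P_2)\neq\emptyset$. For two partitions $P,P'$ of $S$, the partition distance $D(P,P')$ is the minimum number of elements of $S$ that must be removed so that $P$ and $P'$ restricted to the remaining elements coincide. The Radon partition graph $G_T[S,2]$ has as vertices all Radon partitions of $S$, with an edge between $P$ and $P'$ if and only if $D(P,P')=1$. A graph with zero or one vertex is considered connected. *)

(* Defs.v *)
From HB Require Import structures.
From mathcomp Require Import all_boot all_order all_algebra.
From mathcomp Require Import finmap.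
From mathcomp Require Import reals.
Set Implicit Arguments. Unset Strict Implicit. Unset Printing Implicit Defensive.
Import Order.TTheory GRing.Theory Num.Theory.
Local Open Scope ring_scope.

(* Points of R^d are row vectors 'rV[R]_d; a finite point set S is an
   fset of such vectors; its elements form the finite type S. *)

Section Radon.
Variables (R : realType) (d : nat) (S : {fset 'rV[R]_d}).

Definition in_conv (A : {set S}) (x : 'rV[R]_d) : Prop :=
  exists w : S -> R,
    [/\ forall i, 0 <= w i,
        forall i, i \notin A -> w i = 0,
        \sum_(i : S) w i = 1
      & \sum_(i : S) w i *: (val i) = x].

Definition radon_partition (P : {set {set S}}) : Prop :=
  [/\ partition P [set: S], #|P| = 2%N &
      exists A B, [/\ A \in P, B \in P, A != B &
                      exists x, in_conv A x /\ in_conv B x]].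

Definition restrict (P : {set {set S}}) (X : {set S}) : {set {set S}} :=
  [set B :&: X | B in P] :\ set0.

(* partition distance: minimal number of removed elements after which the
   restricted partitions coincide (removing everything always works). *)
Definition partition_distance (P P' : {set {set S}}) : nat :=
  \big[minn/#|[set: S]|]_(X : {set S} | restrict P (~: X) == restrict P' (~: X))
     #|X|.

Definition radon_adj (P P' : {set {set S}}) : bool :=
  partition_distance P P' == 1%N.

Definition radon_graph_connected : Prop :=
  forall P P', radon_partition P -> radon_partition P' ->
    exists s : seq {set {set S}},
      [/\ forall Q, Q \in s -> radon_partition Q,
          path radon_adj P s & last P s = P'].

End Radon.

(* Main.v *)
Require Import Defs.
From HB Require Import structures.
From mathcomp Require Import all_boot all_order all_algebra.
From mathcomp Require Import finmap.
From mathcomp Require Import reals.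
From mathcomp Require Import ring lra.
Set Implicit Arguments. Unset Strict Implicit. Unset Printing Implicit Defensive.
Import Order.TTheory GRing.Theory Num.Theory.
Local Open Scope ring_scope.

Section Proof.
Variables (R : realType) (d : nat) (S : {fset 'rV[R]_d}).

Definition Pa (A : {set S}) : {set {set S}} := [set A; ~:A].
Definition dep (v : S -> R) :=
  [/\ \sum_i v i = 0, \sum_i v i *: (val i) = 0 & exists i, v i != 0].
Definition compat (v : S -> R) (A : {set S}) :=
  forall i, (0 < v i -> i \in A) /\ (v i < 0 -> i \notin A).

Lemma dep_pos_neg v : dep v -> (exists i, 0 < v i) /\ (exists j, v j < 0).
Proof.
case=> s0 _ [i0 vi0].
split.
- case: (boolP [exists i, 0 < v i]) => [/existsP//|/existsPn H].
  have H1 : forall i, true -> 0 <= - v i.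
    by move=> i _; rewrite oppr_ge0 leNgt; apply: H.
  have H2 : \sum_i - v i = 0 by rewrite sumrN s0 oppr0.
  have := psumr_eq0P H1 H2 (i:=i0) isT.
  by move/eqP; rewrite oppr_eq0 (negbTE vi0).
- case: (boolP [exists i, v i < 0]) => [/existsP//|/existsPn H].
  have H1 : forall i, true -> 0 <= v i.
    by move=> i _; rewrite leNgt; apply: H.
  have := psumr_eq0P H1 s0 (i:=i0) isT.
  by move/eqP; rewrite (negbTE vi0).
Qed.

Lemma compat_ne v A : dep v -> compat v A -> A != set0 /\ ~: A != set0.
Proof.
move=> dv cv; have [[i vi] [j vj]] := dep_pos_neg dv.
split; apply/set0Pn.
- by exists i; apply: (cv i).1.
- by exists j; rewrite in_setC; apply: (cv j).2.
Qed.

Lemma Pa_partition A : A != set0 -> ~: A != set0 -> partition (Pa A) [set: S].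
Proof.
move=> nA nC; apply/and3P; split.
- apply/eqP/setP => x; rewrite in_setT; apply/bigcupP.
  case: (boolP (x \in A)) => xA.
  + by exists A => //; rewrite !inE eqxx.
  + by exists (~: A); rewrite ?inE ?eqxx ?orbT.
- apply/trivIsetP => B C; rewrite !inE => /orP[]/eqP-> /orP[]/eqP-> //; rewrite ?eqxx //= => _.
  + by rewrite disjoints_subset setCK.
  + by rewrite disjoints_subset subxx.
- rewrite !inE negb_or; apply/andP; split; by rewrite eq_sym.
Qed.

Lemma Pa_card A : A != set0 -> #|Pa A| = 2%N.
Proof.
move=> /set0Pn[x xA]; rewrite /Pa cards2.
suff -> : A != ~: A by [].
by apply/eqP => E; have := xA; rewrite {1}E inE xA.
Qed.

Lemma radon_of_compat v A : dep v -> compat v A -> radon_partition (Pa A).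
Proof.
move=> dv cv; have [nA nC] := compat_ne dv cv.
split; [exact: Pa_partition | exact: Pa_card |].
exists A, (~: A); split; rewrite ?inE ?eqxx ?orbT //.
  by have := Pa_card nA; rewrite /Pa cards2; case: (A != ~: A).
case: (dv) => s0 sv _; have [[i vi] _] := dep_pos_neg dv.
pose p j := if 0 < v j then v j else 0.
pose n j := if v j < 0 then - v j else 0.
have vpn j : v j = p j - n j.
  rewrite /p /n. case: (ltgtP (v j) 0) => h.
  - by rewrite sub0r opprK.
  - by rewrite subr0.
  - by rewrite h subr0.
have p0 j : 0 <= p j by rewrite /p; case: ltP => // /ltW.
have n0 j : 0 <= n j by rewrite /n; case: ltP => // h; rewrite oppr_ge0 ltW.
pose s := \sum_j p j.
have spos : 0 < s.
  rewrite /s (bigD1 i) //= ltr_pwDl //; first by rewrite /p vi.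
  by apply: sumr_ge0.
have sn : \sum_j n j = s.
  have h : \sum_j v j = \sum_j (p j - n j) by apply: eq_bigr => j _; rewrite vpn.
  by move: h; rewrite /s s0 sumrB => /eqP; rewrite eq_sym subr_eq0 => /eqP ->.
have svn : \sum_j n j *: (val j) = \sum_j p j *: (val j).
  have h : \sum_j v j *: (val j) = \sum_j (p j *: val j - n j *: val j).
    by apply: eq_bigr => j _; rewrite vpn scalerBl.
  by move: h; rewrite sv sumrB => /eqP; rewrite eq_sym subr_eq0 => /eqP ->.
exists (s^-1 *: \sum_j p j *: (val j)); split.
- exists (fun j => s^-1 * p j); split.
  + by move=> j; rewrite mulr_ge0 // invr_ge0 ltW.
  + move=> j jA; rewrite /p; case: ltP => h; last by rewrite mulr0.
    by move: jA; rewrite (cv j).1.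
  + by rewrite -mulr_sumr mulVf // gt_eqF.
  + by rewrite scaler_sumr; apply: eq_bigr => j _; rewrite scalerA.
- exists (fun j => s^-1 * n j); split.
  + by move=> j; rewrite mulr_ge0 // invr_ge0 ltW.
  + move=> j; rewrite inE negbK => jA; rewrite /n; case: ltP => h; last by rewrite mulr0.
    by move: jA; rewrite (negbTE ((cv j).2 h)).
  + by rewrite -mulr_sumr sn mulVf // gt_eqF.
  + by rewrite -svn scaler_sumr; apply: eq_bigr => j _; rewrite scalerA.
Qed.

Lemma compat_of_radon P : radon_partition P ->
  exists v A, [/\ dep v, compat v A & P = Pa A].
Proof.
case=> /and3P[/eqP cov triv n0] c2
  [A [B [AP BP AB [x [[wA [wA0 wAA wA1 wAx]] [wB [wB0 wBB wB1 wBx]]]]]]].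
have PAB : P = [set A; B].
  apply/eqP; rewrite eq_sym eqEcard c2 cards2 AB andbT.
  by apply/subsetP => C; rewrite !inE => /orP[]/eqP->.
move/trivIsetP: triv => triv; have dAB := triv A B AP BP AB.
have BC : B = ~: A.
  apply/setP => y; rewrite inE; case: (boolP (y \in A)) => yA.
  - exact: (disjointFr dAB yA).
  - have : y \in cover P by rewrite cov inE.
    case/bigcupP => C; rewrite PAB !inE => /orP[]/eqP-> //.
    by rewrite (negbTE yA).
exists (fun i => wA i - wB i), A; split.
- split.
  + by rewrite sumrB wA1 wB1 subrr.
  + have -> : \sum_i (wA i - wB i) *: val i = \sum_i (wA i *: val i - wB i *: val i).
      by apply: eq_bigr => i _; rewrite scalerBl.
    by rewrite sumrB wAx wBx subrr.
  + case: (boolP [exists i, wA i != 0]) => [/existsP[i hi]|/existsPn H]; last first.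
      move: wA1; rewrite big1 => [/eqP|i _]; first by rewrite eq_sym oner_eq0.
      by apply/eqP/negPn/H.
    have iA : i \in A by apply: contraR hi => /wAA ->.
    have iB : i \notin B by rewrite (disjointFr dAB iA).
    by exists i; rewrite (wBB i iB) subr0.
- move=> i; split => h.
  + apply: contraLR h => /wAA ->; rewrite sub0r oppr_gt0 -leNgt; exact: wB0.
  + have iB : i \in B by apply: contraLR h => /wBB ->; rewrite subr0 -leNgt; exact: wA0.
    by move: iB; rewrite BC inE.
- by rewrite PAB BC.
Qed.

Lemma restrT B : B != set0 -> ~: B != set0 -> restrict (Pa B) (~: set0) = Pa B.
Proof.
move=> nB nC; rewrite /restrict setC0.
have -> : [set D :&: [set: S] | D in Pa B] = Pa B.
  by rewrite (eq_imset _ (fun D => setIT D)) imset_id.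
apply/setDidPl; rewrite disjoint_sym disjoints1 !inE negb_or.
by rewrite !(eq_sym set0) nB nC.
Qed.

Lemma adj_toggle (A A' : {set S}) (z : S) : A != A' -> (forall y, y != z -> (y \in A) = (y \in A')) ->
  A != set0 -> ~: A != set0 -> A' != set0 -> ~: A' != set0 ->
  radon_adj (Pa A) (Pa A').
Proof.
move=> AA' E nA nC nA' nC'.
have PaNeq : Pa A != Pa A'.
  apply/negP => /eqP E'.
  have : A' \in Pa A by rewrite E' !inE eqxx.
  rewrite !inE => /orP[/eqP h|/eqP h]; first by rewrite h eqxx in AA'.
  have [a aA] := set0Pn _ nA; have [b bC] := set0Pn _ nC.
  have az : a = z by apply/eqP/negP => /negP/E; rewrite h inE aA.
  have bz : b = z.
    by apply/eqP/negP => /negP/E; rewrite h !inE; move: bC; rewrite inE => /negbTE ->.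
  by move: aA bC; rewrite az bz inE => ->.
have restrZ : restrict (Pa A) (~: [set z]) = restrict (Pa A') (~: [set z]).
  rewrite /restrict /Pa !imsetU1 !imset_set1.
  have e1 : A :&: ~:[set z] = A' :&: ~:[set z].
    by apply/setP => y; rewrite !inE; case: (eqVneq y z) => [_|nz]; rewrite ?andbF ?andbT // (E y nz).
  have e2 : ~: A :&: ~:[set z] = ~: A' :&: ~:[set z].
    by apply/setP => y; rewrite !inE; case: (eqVneq y z) => [_|nz]; rewrite ?andbF ?andbT // (E y nz).
  by rewrite e1 e2.
rewrite /radon_adj /partition_distance; apply/eqP/anti_leq/andP; split.
- have hz : restrict (Pa A) (~: [set z]) == restrict (Pa A') (~: [set z]).
    by rewrite restrZ eqxx.
  rewrite -minEnat; apply: leq_trans (@bigmin_le_cond _ _ _ _ [set z] _ (fun X : {set S} => #|X|) hz) _.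
  by rewrite cards1.
- apply: (big_ind (fun n => 0 < n)%N).
  + by apply/card_gt0P; exists z; rewrite inE.
  + by move=> m n; rewrite leq_min => -> ->.
  + move=> X /eqP hX; rewrite card_gt0; apply/negP => /eqP X0.
    by move: hX; rewrite X0 restrT // restrT // => /eqP; rewrite (negbTE PaNeq).
Qed.

Definition conn (P Q : {set {set S}}) := exists s : seq {set {set S}},
  [/\ forall Q0, Q0 \in s -> radon_partition Q0, path (@radon_adj R d S) P s
    & last P s = Q].

Lemma conn_refl P : conn P P.
Proof. by exists [::]. Qed.

Lemma conn_trans P Q T : conn P Q -> conn Q T -> conn P T.
Proof.
move=> [s1 [h1 p1 l1]] [s2 [h2 p2 l2]]; exists (s1 ++ s2); split.
- by move=> Q0; rewrite mem_cat => /orP[]; [apply: h1 | apply: h2].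
- by rewrite cat_path p1 l1 p2.
- by rewrite last_cat l1 l2.
Qed.

Lemma conn_step P Q T : radon_partition Q -> radon_adj P Q -> conn Q T -> conn P T.
Proof.
move=> rQ aPQ [s [h p l]]; exists (Q :: s); split => //=.
- by move=> Q0; rewrite in_cons => /orP[/eqP->//|]; apply: h.
- by rewrite aPQ p.
Qed.

Lemma conn_same v A B : dep v -> compat v A -> compat v B -> conn (Pa A) (Pa B).
Proof.
move=> dv cA cB.
suff H : forall n (A : {set S}), (#|[set i | (i \in A) != (i \in B)]| <= n)%N ->
  compat v A -> conn (Pa A) (Pa B) by apply: H (leqnn _) cA.
elim=> [|n IH] {cA}A.
- rewrite leqn0 cards_eq0 => /eqP e _.
  have -> : A = B; last exact: conn_refl.
  apply/setP => i; have : i \notin [set i | (i \in A) != (i \in B)] by rewrite e inE.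
  by rewrite inE negbK => /eqP.
move=> hn cA.
case: (boolP ([set i | (i \in A) != (i \in B)] == set0)) => [/eqP e|/set0Pn [z hz]].
  by apply: IH => //; rewrite e cards0.
pose A' := [set i | if i == z then i \in B else i \in A].
have cA' : compat v A'.
  move=> i; rewrite !inE; case: (i == z); [exact: cB | exact: cA].
have sub : [set i | (i \in A') != (i \in B)] \subset [set i | (i \in A) != (i \in B)] :\ z.
  apply/subsetP => i; rewrite !inE; case: (eqVneq i z) => [->|nz]; rewrite ?eqxx //=.
have hn' : (#|[set i | (i \in A') != (i \in B)]| <= n)%N.
  apply: leq_trans (subset_leq_card sub) _.
  by move: hn; rewrite (cardsD1 z) hz.
apply: (conn_step (Q := Pa A')); first exact: radon_of_compat dv cA'.
  have [nA nC] := compat_ne dv cA; have [nA' nC'] := compat_ne dv cA'.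
  apply: (adj_toggle (z := z)) => //.
    apply/eqP => e; move: hz; rewrite inE e inE eqxx; by rewrite eqxx.
  by move=> y ny; rewrite inE (negbTE ny).
exact: IH.
Qed.

Lemma meet v w A B : dep v -> dep w -> compat v A -> compat w B ->
  (forall i, 0 <= v i * w i) -> conn (Pa A) (Pa B).
Proof.
move=> dv dw cA cB H.
pose C := [set i | (0 < v i) || (0 < w i)].
have cvC : compat v C.
  move=> i; rewrite !inE; split => h; first by rewrite h.
  rewrite negb_or -!leNgt (ltW h) /=; have := H i; nra.
have cwC : compat w C.
  move=> i; rewrite !inE; split => h; first by rewrite h orbT.
  rewrite negb_or -!leNgt (ltW h) andbT; have := H i; nra.
exact: conn_trans (conn_same dv cA cvC) (conn_same dw cwC cB).
Qed.

Lemma compat_pos v : compat v [set i | 0 < v i].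
Proof. by move=> i; rewrite !inE; split => // h; rewrite -leNgt ltW. Qed.

Lemma PaC B : Pa (~: B) = Pa B.
Proof. by apply/setP => X; rewrite /Pa setCK !inE orbC. Qed.

Lemma main n : forall (v w : S -> R) (A B : {set S}),
  (#|[set i | (v i * w i < 0)%R]| <= n)%N ->
  dep v -> dep w -> compat v A -> compat w B -> conn (Pa A) (Pa B).
Proof.
elim: n => [|n IH] v w A B hn dv dw cA cB;
  (case: (boolP [exists i, v i * w i < 0]) => [/existsP [i1 hi1]| /existsPn H];
   last by apply: (meet dv dw cA cB) => i; rewrite leNgt H).
  have : i1 \in [set i | (v i * w i < 0)%R] by rewrite inE.
  by move: hn; rewrite leqn0 cards_eq0 => /eqP ->; rewrite inE.
case: (arg_maxP (fun j => `|w j| / `|v j|) (P := fun j => v j * w j < 0) hi1)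
  => i0 hi0 imax.
pose a := `|w i0|; pose b := `|v i0|.
have vi0 : v i0 != 0 by apply: contraTneq hi0 => ->; rewrite mul0r ltxx.
have wi0 : w i0 != 0 by apply: contraTneq hi0 => ->; rewrite mulr0 ltxx.
have ha : 0 < a by rewrite normr_gt0.
have hb : 0 < b by rewrite normr_gt0.
pose u j := a * v j + b * w j.
have u0 : u i0 = 0.
  rewrite /u /a /b; case: (ltgtP (v i0) 0) => hv.
  - have hw : 0 < w i0 by nra.
    by rewrite (gtr0_norm hw) (ltr0_norm hv); ring.
  - have hw : w i0 < 0 by nra.
    by rewrite (ltr0_norm hw) (gtr0_norm hv); ring.
  - by rewrite hv eqxx in vi0.
case: (dv) => sv vv _; case: (dw) => sw vw _.
case: (boolP [exists j, u j != 0]) => [/existsP [j0 hj0]|/existsPn uz].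
- have du : dep u.
    split; last by exists j0.
    + by rewrite /u big_split /= -!mulr_sumr sv sw !mulr0 addr0.
    + have -> : \sum_i u i *: val i = a *: (\sum_i v i *: val i) + b *: (\sum_i w i *: val i).
        rewrite !scaler_sumr -big_split /=; apply: eq_bigr => i _.
        by rewrite /u scalerDl !scalerA.
      by rewrite vv vw !scaler0 addr0.
  have vu : forall j, 0 <= v j * u j.
    move=> j; rewrite /u; case: (leP 0 (v j * w j)) => h.
      have := ltW ha; have := ltW hb; nra.
    have key := imax j h; rewrite /= in key.
    have vj : 0 < `|v j|.
      by rewrite normr_gt0; apply: contraTneq h => ->; rewrite mul0r ltxx.
    rewrite ler_pdivrMr // mulrAC ler_pdivlMr // in key.
    have hvv : v j * v j = `|v j| * `|v j| by rewrite -normrM -expr2 ger0_norm ?sqr_ge0.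
    have hvw : v j * w j = - (`|v j| * `|w j|) by rewrite -normrM (ltr0_norm h) opprK.
    have k2 := ler_wpM2l (normr_ge0 (v j)) key.
    rewrite mulrDr mulrCA hvv [v j * (b * w j)]mulrCA hvw /a /b.
    nra.
  pose C := [set i | 0 < u i].
  apply: conn_trans (meet dv du cA (compat_pos u) vu) _.
  apply: (IH u w C B) => //; last exact: compat_pos.
  have sub : [set i | (u i * w i < 0)%R] \subset [set i | (v i * w i < 0)%R] :\ i0.
    apply/subsetP => j; rewrite !inE => h; apply/andP; split.
      by apply: contraTneq h => ->; rewrite u0 mul0r ltxx.
    rewrite ltNge; apply/negP => h2; move: h; rewrite /u.
    have := ltW ha; have := ltW hb; nra.
  apply: leq_trans (subset_leq_card sub) _.
  by move: hn; rewrite (cardsD1 i0) inE hi0 add1n ltnS.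
- have cvB : compat v (~: B).
    move=> i; have : u i = 0 by move/negPn: (uz i) => /eqP.
    rewrite /u => ui; rewrite inE; split => h.
    + have hw : w i < 0 by nra.
      exact: (cB i).2 hw.
    + have hw : 0 < w i by nra.
      by rewrite negbK; exact: (cB i).1 hw.
  rewrite -(PaC B); exact: conn_same dv cA cvB.
Qed.
End Proof.

Theorem theorem4p1 (R : realType) (d : nat) (S : {fset 'rV[R]_d}) :
  (0 < d)%N -> radon_graph_connected S.
Proof.
move=> _ P P' rP rP'.
have [v [A [dv cA ->]]] := compat_of_radon rP.
have [w [B [dw cB ->]]] := compat_of_radon rP'.
exact: (main (leqnn _) dv dw cA cB).
Qed.
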